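(* Let $G=(V,E)$ be an $S$-regular graph with cells $V_1,\dots,V_k$, $n_i=|V_i|$, and let $B,C\subseteq V$, with $B_i=B\cap V_i$, $C_j=C\cap V_j$, $b_i=|B_i|/n_i$, $c_j=|C_j|/n_j$. Then \[\Bigl|\,|E(B,C)|-\sum_{i=1}^k\sum_{j=1}^k\sqrt{\tfrac{s_{ij}s_{ji}}{n_in_j}}\,|B_i||C_j|\,\Bigr|\le\lambda_B\sqrt{\sum_{i=1}^k\sum_{j=1}^k|B_i||C_j|(1-b_i)(1-c_j)}.\]
   Context: All graphs are simple, undirected and connected. $G$ is $S$-regular ($S=(s_{ij})$ a $k\times k$ nonnegative integer matrix) if $V$ is partitioned into nonempty cells $V_1,\dots,V_k$ such that every vertex of $V_i$ has exactly $s_{ij}$ neighbours in $V_j$. $|E(B,C)|$ denotes the number of pairs $(u,v)\in B\times C$ with $uv\in E$ (i.e. $\mathbf{1}_B^TA\mathbf{1}_C$, $A$ the adjacency matrix). The subspace $W=\mathrm{span}\{\mathbf{1}_{V_1},\dots,\mathbf{1}_{V_k}\}$ is $A$-invariant with eigenvalues on $W$ equal to those of $S$; the eigenvalues of $A$ on $W^\perp$ are the bulk eigenvalues (assume $|V|>k$), and $\lambda_B$ is the largest absolute value of a bulk eigenvalue. *)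

(* Defs.v *)
From HB Require Import structures.
From mathcomp Require Import all_boot all_order all_algebra.
From mathcomp Require Import reals.
Set Implicit Arguments. Unset Strict Implicit. Unset Printing Implicit Defensive.
Import Order.TTheory GRing.Theory Num.Theory.
Local Open Scope ring_scope.

Definition simple_graph (T : finType) (e : rel T) : Prop :=
  symmetric e /\ irreflexive e.

Definition connected_graph (T : finType) (e : rel T) : Prop :=
  forall x y : T, connect e x y.

Definition cellset (T : finType) (k : nat) (cell : T -> 'I_k) (i : 'I_k) : {set T} :=
  [set x | cell x == i].

Definition S_regular (T : finType) (e : rel T) (k : nat) (S : 'M[nat]_k)
    (cell : T -> 'I_k) : Prop :=
  (forall i : 'I_k, exists x : T, cell x = i) /\
  (forall (x : T) (j : 'I_k), #|[set y | e x y & cell y == j]| = S (cell x) j).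

Definition nEdges (T : finType) (e : rel T) (B C : {set T}) : nat :=
  #|[set p : T * T | [&& p.1 \in B, p.2 \in C & e p.1 p.2]]|.

Definition adj_apply (R : realType) (T : finType) (e : rel T) (v : T -> R) (x : T) : R :=
  \sum_(y | e x y) v y.

(* v lies in W^perp, W = span of the indicator vectors 1_{V_i} *)
Definition in_Wperp (R : realType) (T : finType) (k : nat) (cell : T -> 'I_k)
    (v : T -> R) : Prop :=
  forall i : 'I_k, \sum_(x in cellset cell i) v x = 0.

Definition bulk_eigenvalue (R : realType) (T : finType) (e : rel T) (k : nat)
    (cell : T -> 'I_k) (mu : R) : Prop :=
  exists v : T -> R, (exists x, v x != 0) /\ in_Wperp cell v /\
    (forall x, adj_apply e v x = mu * v x).

Definition is_lambdaB (R : realType) (T : finType) (e : rel T) (k : nat)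
    (cell : T -> 'I_k) (lam : R) : Prop :=
  (exists mu, bulk_eigenvalue e cell mu /\ `|mu| = lam) /\
  (forall mu, bulk_eigenvalue e cell mu -> `|mu| <= lam).

(* Main.v *)
Require Import Defs.
From HB Require Import structures.
From mathcomp Require Import all_boot all_order all_algebra.
From mathcomp Require Import reals.
From mathcomp Require Import complex.
From mathcomp Require Import ring.
Import Order.TTheory GRing.Theory Num.Theory.
Local Open Scope ring_scope.

Section KL.
Local Open Scope sesquilinear_scope.
Variable R : realType.
Local Notation C := (R[i]).
Local Notation f := (real_complex R).

Lemma normcR (a : R) : `|(f a : C)| = f `|a|.
Proof. by rewrite normc_def /= expr0n /= addr0 sqrtr_sqr. Qed.

Lemma conjcR (a : R) : Num.conj (f a : C) = f a.
Proof. by apply: conj_Creal; rewrite complex_real. Qed.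

Lemma KL n (M : 'M[R]_n) (lam : R) :
  M^T = M -> 0 <= lam ->
  (forall a, eigenvalue M a -> `|a| <= lam) ->
  forall x y : 'rV[R]_n,
  ((x *m M *m y^T) 0 0)^+2 <= lam^+2 * (x *m x^T) 0 0 * (y *m y^T) 0 0.
Proof.
move=> Msym lam0 Meig x y.
pose Mc := M ^ f.
have Mreal : Mc \is a realmx by apply/mxOverP => i j; rewrite mxE complex_real.
have Mcsym : Mc \is symmetricmx.
  by apply/is_hermitianmxP; rewrite expr0 scale1r map_mx_id // /Mc map_trmx Msym.
have Mh : Mc \is hermsymmx by exact: realsym_hermsym.
pose P := spectralmx Mc; pose d := spectral_diag Mc.
have Pu : P \is unitarymx by exact: spectral_unitarymx.
have eqM : Mc = P^t* *m diag_mx d *m P.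
  by rewrite -invmx_unitary //; apply/orthomx_spectralP/hermitian_normalmx.
have dbound i : `|d 0 i| <= f lam.
  have dreal : d 0 i \is Num.real by have/mxOverP := hermitian_spectral_diag_real Mh; apply.
  have eig : eigenvalue Mc (d 0 i).
    apply/eigenvalueP; exists (row i P).
      have PM : P *m Mc = diag_mx d *m P.
        by rewrite eqM !mulmxA (unitarymxP Pu) mul1mx.
      by rewrite -row_mul PM row_mul row_diag_mx -scalemxAl -rowE.
    apply/eqP => h; move: (row_unitarymxP Pu i i).
    rewrite h eqxx dotmxE mul0mx mxE => /eqP; by rewrite eq_sym oner_eq0.
  move: dreal eig; case: (d 0 i) => a b; rewrite complex_real => /eqP ->.
  change (eigenvalue (map_mx f M) (f a) -> `|f a| <= f lam).
  by rewrite eigenvalue_map normcR lecR => /Meig.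
have hmap (A : 'M[R]_1) : f (A 0 0) = (A ^ f) 0 0 by rewrite mxE.
have hT (z : 'rV[R]_n) : (map_mx f z)^T = map_mx Num.conj ((map_mx f z)^T).
  by apply/matrixP => i j; rewrite !mxE conjcR.
rewrite -[_ ^+ 2]ger0_norm ?sqr_ge0 // normrX.
rewrite -lecR !rmorphXn !rmorphM /= -normcR !hmap !map_mxM -!map_trmx -/Mc (hT x) (hT y).
rewrite -!dotmxE.
have dotP (A B : 'rV[C]_n) : dotmx (A *m P) B = dotmx A (B *m P^t*).
  by rewrite !dotmxE trmx_mul map_mxM trmxCK mulmxA.
have dotU (A : 'rV[C]_n) : dotmx (A *m P^t*) (A *m P^t*) = dotmx A A.
  by rewrite !dotmxE trmx_mul map_mxM mulmxA mulmxtVK // trmxC_unitary.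
rewrite eqM !mulmxA dotP -(dotU (map_mx f x)) -(dotU (map_mx f y)).
set X := _ *m P^t*; set Y := _ *m P^t*.
have XD : dotmx (X *m diag_mx d) (X *m diag_mx d) <= (f lam)^+2 * dotmx X X.
  rewrite !dotmxE mul_mx_diag !mxE mulr_sumr; apply: ler_sum => j _.
  rewrite !mxE -!normCK normrM exprMn mulrC ler_wpM2r ?exprn_ge0 ?normr_ge0 //.
  by rewrite !expr2 ler_pM ?normr_ge0.
apply: le_trans (leif_le (CauchySchwarz (@dotmx _ n) _ _)) _.
rewrite -expr2 ler_wpM2r ?dnorm_ge0 //.
Qed.

Lemma sumT (T : finType) (F : T -> R) :
  \sum_x F x = \sum_(i < #|T|) F (enum_val i).
Proof. by rewrite (big_enum_val (A := T)). Qed.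

Lemma KLf (T : finType) (Mf : T -> T -> R) (lam : R) :
  (forall x y, Mf x y = Mf y x) -> 0 <= lam ->
  (forall a (g : T -> R), (exists x, g x != 0) ->
     (forall y, \sum_x g x * Mf x y = a * g y) -> `|a| <= lam) ->
  forall u w : T -> R,
  (\sum_x \sum_y u x * Mf x y * w y)^+2
    <= lam^+2 * (\sum_x u x ^+ 2) * (\sum_y w y ^+ 2).
Proof.
move=> Msym lam0 Heig u w.
pose M := \matrix_(i < #|T|, j < #|T|) Mf (enum_val i) (enum_val j).
pose x := \row_(i < #|T|) u (enum_val i).
pose y := \row_(i < #|T|) w (enum_val i).
have E1 : \sum_x \sum_y u x * Mf x y * w y = (x *m M *m y^T) 0 0.
  rewrite sumT; under eq_bigr => i _ do rewrite sumT.
  rewrite exchange_big !mxE; apply: eq_bigr => j _.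
  rewrite !mxE mulr_suml; apply: eq_bigr => i _; rewrite !mxE.
  by [].
have E2 (z : 'rV[R]_#|T|) (h : T -> R) : z = \row_(i < #|T|) h (enum_val i) ->
    \sum_x h x ^+ 2 = (z *m z^T) 0 0.
  move=> ->; rewrite sumT !mxE; apply: eq_bigr => i _; rewrite !mxE expr2.
  by [].
rewrite E1 (E2 x u) // (E2 y w) //.
apply: KL => //.
  by apply/matrixP => i j; rewrite !mxE Msym.
move=> a /eigenvalueP [v vM vn0].
apply: (Heig a (fun t => v 0 (enum_rank t))).
  have [j vj] : exists j, v 0 j != 0.
    apply/existsP; apply: contraNT vn0 => /existsPn H.
    by apply/eqP/rowP => j; rewrite mxE; apply/eqP/negbNE/H.
  by exists (enum_val j); rewrite enum_valK.
move=> t; have /rowP /(_ (enum_rank t)) := vM.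
rewrite !mxE => <-; rewrite sumT; apply: eq_bigr => i _.
by rewrite !mxE enum_valK enum_rankK.
Qed.
End KL.

Lemma indsum (R : realType) (T : finType) (S0 : {set T}) :
  \sum_x ((x \in S0) : nat)%:R = (#|S0|%:R : R).
Proof.
rewrite -sum1_card natr_sum [RHS]big_mkcond /=; apply: eq_bigr => x _.
by case: (x \in S0).
Qed.
Arguments indsum {R T} S0.

Lemma L_part (R : realType) (T : finType) (k : nat) (cell : T -> 'I_k)
    (A : {set T}) (F : 'I_k -> R) :
  \sum_x ((x \in A) : nat)%:R * F (cell x)
    = \sum_(i < k) (#|A :&: cellset cell i|)%:R * F i.
Proof.
rewrite (partition_big cell predT) //=; apply: eq_bigr => i _.
rewrite (eq_bigr (fun x => ((x \in A) : nat)%:R * F i)) => [|x /eqP -> //].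
rewrite -mulr_suml -indsum big_mkcond /=; congr (_ * _).
apply: eq_bigr => x _; rewrite /cellset !inE andbC.
by case: (cell x == i).
Qed.
Arguments L_part {R T k} cell A F.

Theorem mainTheorem11 (R : realType) (T : finType) (e : rel T) (k : nat)
    (S : 'M[nat]_k) (cell : T -> 'I_k) (lam : R) (B C : {set T}) :
  simple_graph e -> connected_graph e ->
  S_regular e S cell ->
  (k < #|T|)%N ->
  is_lambdaB e cell lam ->
  let n := fun i => #|cellset cell i| in
  let Bi := fun i => #|B :&: cellset cell i| in
  let Cj := fun j => #|C :&: cellset cell j| in
  let b := fun i => (Bi i)%:R / (n i)%:R : R in
  let c := fun j => (Cj j)%:R / (n j)%:R : R in
  `| (nEdges e B C)%:R
     - \sum_(i < k) \sum_(j < k)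
         Num.sqrt (((S i j) * (S j i))%:R / ((n i) * (n j))%:R) * (Bi i)%:R * (Cj j)%:R |
  <= lam * Num.sqrt (\sum_(i < k) \sum_(j < k)
                       (Bi i)%:R * (Cj j)%:R * (1 - b i) * (1 - c j)).
Proof.
move=> [esy eirr] _ [cellne Sreg] _ [[mu [mubulk mulam]] lamB].
cbv zeta.
set n := (fun i => #|cellset cell i|).
set Bi := (fun i => #|B :&: cellset cell i|).
set Cj := (fun i => #|C :&: cellset cell i|).
set b := (fun i => (Bi i)%:R / (n i)%:R : R).
set c := (fun i => (Cj i)%:R / (n i)%:R : R).
have lam0 : 0 <= lam by rewrite -mulam normr_ge0.
have n0 i : (0 < n i)%N.
  have [x hx] := cellne i; rewrite /n card_gt0; apply/set0Pn; exists x.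
  by rewrite /cellset inE hx.
have nR0 i : (n i)%:R != 0 :> R by rewrite pnatr_eq0 -lt0n n0.
have cnt j : #|[pred y | cell y == j]| = n j.
  by rewrite /n /cellset; apply: eq_card => y; rewrite !inE.
pose s i j : R := (S i j)%:R.
pose Mf x y : R := (e x y)%:R - s (cell x) (cell y) / (n (cell y))%:R.
have rowsum x j : \sum_(y | cell y == j) ((e x y) : nat)%:R = s (cell x) j.
  rewrite /s -Sreg -indsum big_mkcond /=; apply: eq_bigr => y _.
  by rewrite inE andbC; case: (cell y == j).
have F1 x j : \sum_(y | cell y == j) Mf x y = 0.
  rewrite /Mf sumrB rowsum.
  rewrite (eq_bigr (fun _ => s (cell x) j / (n j)%:R)) => [|y /eqP -> //].
  by rewrite sumr_const cnt -[X in _ - X]mulr_natr divfK // subrr.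
have F2 i j : (n i)%:R * s i j = (n j)%:R * s j i.
  have D i' j' : \sum_(x | cell x == i') \sum_(y | cell y == j') ((e x y) : nat)%:R
      = (n i')%:R * s i' j'.
    rewrite (eq_bigr (fun _ => s i' j')) => [|x /eqP <-]; last exact: rowsum.
    by rewrite sumr_const cnt mulr_natl.
  rewrite -!D exchange_big; apply: eq_bigr => y _; apply: eq_bigr => x _.
  by rewrite esy.
have F1' (h : 'I_k -> R) x : \sum_y Mf x y * h (cell y) = 0.
  rewrite (partition_big cell predT) //=; apply: big1 => j _.
  rewrite (eq_bigr (fun y => Mf x y * h j)) => [|y /eqP -> //].
  by rewrite -mulr_suml F1 mul0r.
have Msym x y : Mf x y = Mf y x.
  rewrite /Mf esy; congr (_ - _); apply/eqP; rewrite eqr_div //.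
  by rewrite mulrC F2 mulrC.
have Heig : forall a (g : T -> R), (exists x, g x != 0) ->
     (forall y, \sum_x g x * Mf x y = a * g y) -> `|a| <= lam.
  move=> a g [x0 gx0] Hg.
  have [->|a0] := eqVneq a 0; first by rewrite normr0.
  have G0 j : \sum_(y | cell y == j) g y = 0.
    have : a * \sum_(y | cell y == j) g y = 0.
      rewrite mulr_sumr (eq_bigr (fun y => \sum_x g x * Mf x y)) => [|y _]; last by rewrite Hg.
      rewrite exchange_big /=; apply: big1 => x _.
      by rewrite -mulr_sumr F1 mulr0.
    by move/eqP; rewrite mulf_eq0 (negPf a0) /= => /eqP.
  apply: lamB; exists g; split; first by exists x0.
  split.
    by move=> j; rewrite -[RHS](G0 j); apply: eq_bigl => y; rewrite /cellset inE.
  move=> y; rewrite /adj_apply -Hg.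
  rewrite [RHS](eq_bigr (fun x => g x * ((e x y) : nat)%:R
     - g x * (s (cell x) (cell y) / (n (cell y))%:R))) => [|x _]; last by rewrite /Mf mulrBr.
  rewrite sumrB.
  have -> : \sum_x g x * (s (cell x) (cell y) / (n (cell y))%:R) = 0.
    rewrite (partition_big cell predT) //=; apply: big1 => i _.
    rewrite (eq_bigr (fun x => g x * (s i (cell y) / (n (cell y))%:R))) => [|x /eqP -> //].
    by rewrite -mulr_suml G0 mul0r.
  rewrite subr0 big_mkcond /=; apply: eq_bigr => x _; rewrite esy.
  by case: (e x y); rewrite /= ?mulr1n ?mulr0n ?mulr1 ?mulr0.
pose u x := ((x \in B) : nat)%:R - b (cell x).
pose w x := ((x \in C) : nat)%:R - c (cell x).
have K := @KLf R T Mf lam Msym lam0 Heig u w.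
have E2 (A : {set T}) (h : 'I_k -> R) :
    (forall i, h i = (#|A :&: cellset cell i|)%:R / (n i)%:R) ->
    \sum_x (((x \in A) : nat)%:R - h (cell x))^+2
      = \sum_i (#|A :&: cellset cell i|)%:R * (1 - h i).
  move=> hA.
  rewrite (eq_bigr (fun x => ((x \in A) : nat)%:R * (1 - 2 * h (cell x))
       + ((x \in [set: T]) : nat)%:R * h (cell x) ^+ 2)) => [|x _]; last first.
    rewrite in_setT; case: (x \in A) => /=; rewrite ?mulr1n ?mulr0n.
      by ring.
    by ring.
  rewrite big_split /= (L_part cell A (fun i => 1 - 2 * h i)).
  rewrite (L_part cell [set: T] (fun i => h i ^+ 2)) -big_split /=.
  apply: eq_bigr => i _; rewrite setTI -/(n i) hA.
  by field; rewrite nR0.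
have inner x : \sum_y u x * Mf x y * w y
    = u x * \sum_y Mf x y * ((y \in C) : nat)%:R.
  rewrite (_ : \sum_y Mf x y * ((y \in C) : nat)%:R = \sum_y Mf x y * w y).
    by rewrite mulr_sumr; apply: eq_bigr => y _; rewrite mulrA.
  rewrite [RHS](eq_bigr (fun y => Mf x y * ((y \in C) : nat)%:R - Mf x y * c (cell y))) => [|y _].
    by rewrite sumrB F1' subr0.
  by rewrite /w mulrBr.
have row x : \sum_y Mf x y * ((y \in C) : nat)%:R
    = \sum_y ((e x y) : nat)%:R * ((y \in C) : nat)%:R
      - \sum_j (#|C :&: cellset cell j|)%:R * (s (cell x) j / (n j)%:R).
  rewrite -(L_part cell C (fun j => s (cell x) j / (n j)%:R)) -sumrB.
  by apply: eq_bigr => y _; rewrite /Mf mulrBl [_ * (s _ _ / _)]mulrC.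
have E1 : \sum_x \sum_y u x * Mf x y * w y
    = (nEdges e B C)%:R - \sum_i (#|B :&: cellset cell i|)%:R *
        \sum_j (#|C :&: cellset cell j|)%:R * (s i j / (n j)%:R).
  rewrite (eq_bigr _ (fun x _ => inner x)).
  rewrite (eq_bigr (fun x => ((x \in B) : nat)%:R * \sum_y Mf x y * ((y \in C) : nat)%:R
     - b (cell x) * \sum_y Mf x y * ((y \in C) : nat)%:R)) => [|x _]; last by rewrite /u mulrBl.
  rewrite sumrB.
  have -> : \sum_x b (cell x) * \sum_y Mf x y * ((y \in C) : nat)%:R = 0.
    rewrite (eq_bigr (fun x => \sum_y b (cell x) * (Mf x y * ((y \in C) : nat)%:R))) => [|x _]; last by rewrite mulr_sumr.
    rewrite exchange_big /=; apply: big1 => y _.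
    rewrite (eq_bigr (fun x => Mf y x * b (cell x) * ((y \in C) : nat)%:R)) => [|x _].
      by rewrite -mulr_suml F1' mul0r.
    by rewrite Msym mulrA [b _ * _]mulrC.
  rewrite subr0 (eq_bigr _ (fun x _ => congr1 (fun t => _ * t) (row x))).
  rewrite (eq_bigr (fun x => ((x \in B) : nat)%:R * \sum_y ((e x y) : nat)%:R * ((y \in C) : nat)%:R
     - ((x \in B) : nat)%:R * \sum_j (#|C :&: cellset cell j|)%:R * (s (cell x) j / (n j)%:R))) => [|x _]; last by rewrite mulrBr.
  rewrite sumrB (L_part cell B (fun i => \sum_j (#|C :&: cellset cell j|)%:R * (s i j / (n j)%:R))).
  congr (_ - _).
  rewrite /nEdges -indsum.
  rewrite (eq_bigr (fun x => \sum_y ((x \in B) : nat)%:R * (((e x y) : nat)%:R * ((y \in C) : nat)%:R))) => [|x _]; last by rewrite mulr_sumr.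
  rewrite pair_big /=; apply: eq_bigr => [[x y]] _; rewrite inE /=.
  by case: (x \in B); case: (y \in C); case: (e x y); rewrite /= ?mulr1n ?mulr0n ?mul1r ?mulr1 ?mul0r ?mulr0.
have sq i j : Num.sqrt (((S i j) * (S j i))%:R / ((n i) * (n j))%:R) = s i j / (n j)%:R.
  have sji : s j i = (n i)%:R * s i j / (n j)%:R by rewrite F2 mulrC mulKf.
  have h : ((S i j) * (S j i))%:R / ((n i) * (n j))%:R = (s i j / (n j)%:R) ^+ 2.
    rewrite !natrM -/(s i j) -/(s j i) sji.
    by field; rewrite !nR0.
  by rewrite h sqrtr_sqr ger0_norm // divr_ge0 ?ler0n.
have PQ : \sum_(i < k) \sum_(j < k) (Bi i)%:R * (Cj j)%:R * (1 - b i) * (1 - c j)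
    = (\sum_i (Bi i)%:R * (1 - b i)) * (\sum_j (Cj j)%:R * (1 - c j)).
  rewrite mulr_suml; apply: eq_bigr => i _; rewrite mulr_sumr; apply: eq_bigr => j _.
  by ring.
have Q : \sum_(i < k) \sum_(j < k)
         Num.sqrt (((S i j) * (S j i))%:R / ((n i) * (n j))%:R) * (Bi i)%:R * (Cj j)%:R
    = \sum_i (#|B :&: cellset cell i|)%:R *
        \sum_j (#|C :&: cellset cell j|)%:R * (s i j / (n j)%:R).
  apply: eq_bigr => i _; rewrite mulr_sumr; apply: eq_bigr => j _.
  by rewrite sq; rewrite /Bi /Cj; ring.
rewrite E1 (E2 B b) // (E2 C c) // in K.
rewrite PQ Q.
set q := _ - _.
set P1 := \sum_i _ * (1 - b i).
set Q1 := \sum_j _ * (1 - c j).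
have P1E : P1 = \sum_i (#|B :&: cellset cell i|)%:R * (1 - b i) by [].
have Q1E : Q1 = \sum_j (#|C :&: cellset cell j|)%:R * (1 - c j) by [].
rewrite -P1E -Q1E in K.
have K0 : 0 <= lam ^+ 2 * (P1 * Q1) by rewrite mulrA; apply: le_trans K; exact: sqr_ge0.
rewrite -sqrtr_sqr; apply: (@le_trans _ _ (Num.sqrt (lam ^+ 2 * (P1 * Q1)))).
  by rewrite ler_sqrt // mulrA.
by rewrite sqrtrM ?sqr_ge0 // sqrtr_sqr ger0_norm.
Qed.
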